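(* For every positive integer $s$, the maximum size $l(s)$ of an $(s,s+1,s+2)$-core partition is $$l(s)=\begin{cases} m\binom{m+1}{3}, & s=2m-1,\\[4pt] (m+1)\binom{m+1}{3}+\binom{m+2}{3}, & s=2m.\end{cases}$$
   Context: A partition is an $(s,s+1,s+2)$-core if none of the hook lengths of the boxes of its Young diagram is divisible by $s$, by $s+1$, or by $s+2$. The size of a partition is the sum of its parts. *)

(* Defs.v *)
From mathcomp Require Import all_boot.
Set Implicit Arguments. Unset Strict Implicit. Unset Printing Implicit Defensive.

Definition is_partition (p : seq nat) : Prop :=
  sorted geq p /\ all (fun x => 0 < x) p.

Definition conj_part (p : seq nat) (j : nat) : nat := count (fun x => j < x) p.

(* hook length of box (i, j): arm + leg + 1
   = (p_i - j - 1) + (p'_j - i - 1) + 1 *)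
Definition hook (p : seq nat) (i j : nat) : nat :=
  (nth 0 p i - j) + (conj_part p j - i) - 1.

Definition in_diagram (p : seq nat) (i j : nat) : Prop :=
  i < size p /\ j < nth 0 p i.

Definition is_sss_core (s : nat) (p : seq nat) : Prop :=
  is_partition p /\
  forall i j, in_diagram p i j ->
    ~~ (s %| hook p i j) /\ ~~ (s.+1 %| hook p i j) /\ ~~ (s.+2 %| hook p i j).

Definition psize (p : seq nat) : nat := sumn p.

Definition is_max_core_size (s n : nat) : Prop :=
  (exists p, is_sss_core s p /\ psize p = n) /\
  (forall p, is_sss_core s p -> psize p <= n).

(* Main.v *)
Require Import Defs.
From mathcomp Require Import all_boot zify.
Set Implicit Arguments. Unset Strict Implicit. Unset Printing Implicit Defensive.

Definition hb (p : seq nat) (i : nat) : nat := nth 0 p i + (size p - 1 - i).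
Definition beta (p : seq nat) : seq nat := map (hb p) (iota 0 (size p)).

Definition closedb (s : nat) (b : seq nat) : Prop :=
  forall x e, x \in b -> e < 3 -> s + e <= x -> x != s + e /\ (x - (s + e)) \in b.

Lemma geq_trans : transitive geq.
Proof. by move=> x y z /= H1 H2; exact: leq_trans H2 H1. Qed.

Lemma conj_partP p j l : sorted geq p -> (l < conj_part p j) = (j < nth 0 p l).
Proof.
elim: p l => [|a p IH] l Hs; first by rewrite nth_nil.
have Hs' : sorted geq p := path_sorted Hs.
have Hmin := order_path_min geq_trans Hs.
rewrite /conj_part /=.
case: (ltnP j a) => Hja /=.
- case: l => [|l] //=. rewrite add1n ltnS. exact: IH.
- have -> : count (fun x => j < x) p = 0.
    apply/eqP; rewrite -leqn0 leqNgt -has_count; apply/hasPn => x Hx /=.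
    have := allP Hmin x Hx => /= Hxa. by rewrite -leqNgt (leq_trans Hxa).
  case: l => [|l] /=; first by apply/esym/negbTE; rewrite -leqNgt.
  have H : nth 0 p l <= a.
    case: (ltnP l (size p)) => Hl.
    + exact: (allP Hmin _ (mem_nth 0 Hl)).
    + by rewrite nth_default.
  by apply/esym/negbTE; rewrite -leqNgt (leq_trans H).
Qed.

Section Part.
Variable p : seq nat.
Hypothesis Hp : is_partition p.
Let k := size p.

Lemma p_sorted : sorted geq p. Proof. by case: Hp. Qed.

Lemma p_pos i : i < k -> 0 < nth 0 p i.
Proof. move=> Hi; case: Hp => _ /allP; apply; exact: mem_nth. Qed.

Lemma p_mono i l : i <= l -> l < k -> nth 0 p l <= nth 0 p i.
Proof.
move=> Hil Hl.
have := sorted_leq_nth geq_trans (fun x => leqnn x) 0 p_sorted.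
move=> /(_ i l); rewrite !inE => H; apply: H => //. exact: leq_ltn_trans Hl.
Qed.

Lemma conj_le j : conj_part p j <= k.
Proof. exact: count_size. Qed.

Lemma conj_mono j : conj_part p j.+1 <= conj_part p j.
Proof. apply: sub_count => x /=; exact: ltnW. Qed.

Lemma hook_eq i j : i < k -> j < nth 0 p i ->
  hook p i j + (k + j - conj_part p j) = hb p i /\ i < conj_part p j.
Proof.
move=> Hi Hj.
have Hc : i < conj_part p j by rewrite conj_partP // p_sorted.
have Hc2 := conj_le j.
rewrite /hook /hb -/k; split => //; lia.
Qed.

Lemma phi_notin j : (k + j - conj_part p j) \notin beta p.
Proof.
apply/negP => /mapP [l]; rewrite mem_iota add0n => /andP [_ Hl].
rewrite /hb -/k => E.
have Hc2 := conj_le j.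
case: (ltnP j (nth 0 p l)) => Hjl.
- have : l < conj_part p j by rewrite conj_partP // p_sorted.
  lia.
- have : ~~ (l < conj_part p j) by rewrite conj_partP ?p_sorted // -leqNgt.
  rewrite -leqNgt. lia.
Qed.

Lemma hb_decr i l : i < l -> l < k -> hb p l < hb p i.
Proof.
move=> Hil Hl. have := p_mono (ltnW Hil) Hl. rewrite /hb -/k. lia.
Qed.

Lemma hb_pos i : i < k -> 0 < hb p i.
Proof. move=> Hi; have := p_pos Hi; rewrite /hb; lia. Qed.

Lemma beta_uniq : uniq (beta p).
Proof.
rewrite map_inj_in_uniq ?iota_uniq // => a b; rewrite !mem_iota !add0n => Ha Hb E.
case: (ltngtP a b) => // H.
- have := hb_decr H Hb; lia.
- have := hb_decr H Ha; lia.
Qed.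

Lemma beta_pos x : x \in beta p -> 0 < x.
Proof. by move=> /mapP [l]; rewrite mem_iota add0n => /andP [_ Hl] ->; apply: hb_pos. Qed.

Lemma psize_beta : psize p + 'C(k, 2) = sumn (beta p).
Proof.
rewrite /beta /psize -/k.
have -> : sumn [seq hb p i | i <- iota 0 k] = \sum_(0 <= i < k) hb p i.
  by rewrite sumnE big_map /index_iota subn0.
rewrite /hb big_split /= -/k.
have -> : \sum_(0 <= i < k) (k - 1 - i) = \sum_(0 <= i < k) i.
  rewrite big_nat_rev /=; apply: eq_big_nat => i /andP [_ Hi]; rewrite add0n; lia.
rewrite -bin2_sum. congr (_ + _).
by rewrite -{1}(mkseq_nth 0 p) /mkseq sumnE big_map /index_iota subn0.
Qed.

Lemma hook_surj i y : i < k -> y < hb p i -> y \notin beta p ->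
  exists2 j, j < nth 0 p i & k + j - conj_part p j = y.
Proof.
move=> Hi Hy Hyb.
set phi := fun j => k + j - conj_part p j.
set A := map phi (iota 0 (nth 0 p i)).
set Nb := [seq z <- iota 0 (hb p i) | z \notin beta p].
have phimono : forall a b, a < b -> b < nth 0 p i -> phi a < phi b.
  move=> a b Hab Hb.
  have Hm : conj_part p b <= conj_part p a.
    elim: b Hab Hb => // b IHb; rewrite ltnS leq_eqVlt => /orP [/eqP -> _| Hab Hb].
    - exact: conj_mono.
    - exact: leq_trans (conj_mono b) (IHb Hab (ltnW Hb)).
  have [_ Hc] := hook_eq Hi Hb. have Hc2 := conj_le b. rewrite /phi; lia.
have uA : uniq A.
  rewrite map_inj_in_uniq ?iota_uniq // => a b; rewrite !mem_iota !add0n => Ha Hb E.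
  case: (ltngtP a b) => // H.
  - have := phimono _ _ H Hb; lia.
  - have := phimono _ _ H Ha; lia.
have sAN : {subset A <= Nb}.
  move=> z /mapP [j]; rewrite mem_iota add0n => /andP [_ Hj] ->.
  rewrite mem_filter phi_notin mem_iota add0n /=.
  have [E _] := hook_eq Hi Hj. rewrite /phi.
  have : 0 < hook p i j.
    rewrite /hook. have [_ Hc] := hook_eq Hi Hj. lia.
  lia.
have szN : size Nb <= size A.
  rewrite size_map size_iota /Nb size_filter.
  have H1 : count (fun z => z \in beta p) (iota 0 (hb p i)) + count (fun z => z \notin beta p) (iota 0 (hb p i)) = hb p i.
    by rewrite (count_predC (fun z => z \in beta p)) size_iota.
  have H2 : k - 1 - i <= count (fun z => z \in beta p) (iota 0 (hb p i)).
    rewrite -size_filter.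
    have -> : k - 1 - i = size (map (hb p) (iota i.+1 (k - 1 - i))) by rewrite size_map size_iota.
    apply: uniq_leq_size.
    - rewrite map_inj_in_uniq ?iota_uniq // => a b; rewrite !mem_iota => Ha Hb E.
      case: (ltngtP a b) => // H.
      + have := @hb_decr a b H ltac:(lia); lia.
      + have := @hb_decr b a H ltac:(lia); lia.
    - move=> z /mapP [l]; rewrite mem_iota => Hl ->.
      rewrite mem_filter mem_iota add0n /= map_f ?mem_iota ?add0n /=; last by lia.
      apply: hb_decr; lia.
  move: H1 H2; rewrite /hb -/k. lia.
have [_ eqAN] := uniq_min_size uA sAN szN.
have : y \in Nb by rewrite mem_filter Hyb mem_iota add0n.
rewrite -eqAN => /mapP [j]; rewrite mem_iota add0n => /andP [_ Hj] ->.
by exists j.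
Qed.

End Part.

Lemma core_closed s p : 0 < s -> is_sss_core s p -> closedb s (beta p).
Proof.
move=> Hs [Hp Hc] x e Hx He Hgx.
case Hxg: ((x - (s + e)) \in beta p).
  split=> //. have := beta_pos Hp Hxg. apply: contraTneq => ->. by rewrite subnn.
exfalso.
move: Hx => /mapP [i]; rewrite mem_iota add0n => /andP [_ Hi] Ex.
have Hy : x - (s + e) < hb p i by rewrite -Ex; lia.
have [j Hj Ej] := hook_surj Hp Hi Hy (negbT Hxg).
have [E _] := hook_eq Hp Hi Hj.
have Hh : hook p i j = s + e by move: E; rewrite Ej -Ex; lia.
have [H0 [H1 H2]] := Hc i j (conj Hi Hj).
move: H0 H1 H2; rewrite Hh.
clear -He; by case: e He => [|[|[|]]] //= _; rewrite ?addn0 ?addn1 ?addn2 dvdnn.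
Qed.

Lemma closed_iter s b g c h : 0 < s -> closedb s b -> (exists2 e, e < 3 & g = s + e) ->
  h \in b -> c * g <= h -> h - c * g \in b.
Proof.
move=> Hs Hb [e He ->]; elim: c h => [|c IH] h Hh Hc; first by rewrite mul0n subn0.
have H1 : h - c * (s + e) \in b by apply: IH => //; lia.
have := Hb _ e H1 He ltac:(lia). move=> [_ H2].
have -> : h - c.+1 * (s + e) = h - c * (s + e) - (s + e) by rewrite mulSn; lia.
exact: H2.
Qed.

Lemma closed_core s p : 0 < s -> is_partition p -> closedb s (beta p) -> is_sss_core s p.
Proof.
move=> Hs Hp Hb; split=> // i j [Hi Hj].
have [E Hc] := hook_eq Hp Hi Hj.
have Hpos : 0 < hook p i j by rewrite /hook; have := conj_le p j; lia.
have Hnot := phi_notin Hp j.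
have key : forall e, e < 3 -> ~~ (s + e %| hook p i j).
  move=> e He; apply/negP => /dvdnP [c Hcg].
  have Hx : hb p i \in beta p by apply: map_f; rewrite mem_iota add0n.
  have := closed_iter (c:=c) Hs Hb (ex_intro2 _ _ e He erefl) Hx.
  rewrite -Hcg -E addKn => H; move: Hnot; rewrite H //; lia.
split; first by have := key 0 isT; rewrite addn0.
split; first by have := key 1 isT; rewrite addn1.
by have := key 2 isT; rewrite addn2.
Qed.

Definition part_of (b : seq nat) : seq nat :=
  [seq nth 0 b i - (size b - 1 - i) | i <- iota 0 (size b)].

Section PartOf.
Variable b : seq nat.
Hypothesis Hbs : sorted (fun x y => y < x) b.
Hypothesis Hbp : all (fun x => 0 < x) b.

Lemma b_gap i l : i <= l -> l < size b -> nth 0 b l + (l - i) <= nth 0 b i.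
Proof.
move=> Hil; elim: l Hil => [|l IH] Hil Hl; first by move: Hil; rewrite leqn0 => /eqP ->; rewrite subn0 addn0.
move: Hil; rewrite leq_eqVlt => /orP [/eqP <-|]; first by rewrite subnn addn0.
rewrite ltnS => Hil.
have H1 := IH Hil (ltnW Hl).
have := (sortedP 0 Hbs) l Hl => /= H2.
lia.
Qed.

Lemma b_pos i : i < size b -> 0 < nth 0 b i.
Proof. by move=> Hi; apply: (allP Hbp); apply: mem_nth. Qed.

Lemma b_big i : i < size b -> size b - i <= nth 0 b i.
Proof.
move=> Hi. have H1 : i <= (size b).-1 by lia. have H2 : (size b).-1 < size b by lia.
have := b_gap H1 H2. have := b_pos H2. lia.
Qed.

Lemma part_of_size : size (part_of b) = size b.
Proof. by rewrite size_map size_iota. Qed.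

Lemma part_of_nth i : i < size b -> nth 0 (part_of b) i = nth 0 b i - (size b - 1 - i).
Proof. by move=> Hi; rewrite (nth_map 0) ?size_iota // nth_iota. Qed.

Lemma part_of_partition : is_partition (part_of b).
Proof.
split.
- apply/(sortedP 0) => i; rewrite part_of_size => Hi.
  rewrite !part_of_nth ?(ltnW Hi) //=.
  have := (sortedP 0 Hbs) i Hi => /= H.
  have := b_big Hi. lia.
- apply/allP => x /mapP [i]; rewrite mem_iota add0n => /andP [_ Hi] ->.
  have := b_big Hi. lia.
Qed.

Lemma beta_part_of : beta (part_of b) = b.
Proof.
rewrite /beta part_of_size -[RHS](mkseq_nth 0 b) /mkseq.
apply/eq_in_map => i; rewrite mem_iota add0n => /andP [_ Hi].
rewrite /hb part_of_size part_of_nth //. have := b_big Hi. lia.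
Qed.

End PartOf.

Lemma C2 n : 2 * 'C(n, 2) = n * (n - 1).
Proof.
elim: n => [|n IH] //. rewrite binS bin1. nia.
Qed.

Definition L (s : nat) := s./2.
Definition nn (s j : nat) := s - 1 - 2 * j.
Definition Msz (s j : nat) := j.+1 * s - 1.
Definition Gs s (k : nat -> nat) := \sum_(j < L s) k j * Msz s j.
Definition Cs s (k : nat -> nat) := \sum_(j < L s) 'C(k j, 2).
Definition Ks s (k : nat -> nat) := \sum_(j < L s) k j.
Definition valid s (k : nat -> nat) := k 0 <= s - 1 /\ forall j, 0 < k j.+1 -> k j.+1 + 2 <= k j.

Lemma valid_bound s k j : valid s k -> 0 < k j -> k j + 2 * j <= k 0.
Proof.
move=> [_ Hv]; elim: j => [|j IH] Hk; first by rewrite muln0 addn0.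
have := Hv j Hk => H. have : 0 < k j by lia. move=> /IH. lia.
Qed.

Lemma L_S s : L s.+2 = (L s).+1.
Proof. by []. Qed.

Lemma L_bound s j : j < L s -> 2 * j + 2 <= s.
Proof. rewrite /L. lia. Qed.

Lemma step_arith (s a d r k : nat) : s.+1 = a + d -> 2*r+2 <= s -> (k = 0 \/ k + 2*r+2 <= a) ->
  d*k + d*(r+1)*(a-(2*r+1)) <= (s-1-2*r-k)*(2*r+3) + d*(r+2)*(a-(2*r+3)).
Proof.
move=> Es Hr Hk.
case: (ltnP a (2*r+2)) => Ha.
  have Hk0 : k = 0 by case: Hk => //; lia.
  subst k. rewrite (_ : a - (2*r+1) = 0); last by lia.
  rewrite muln0 muln0 add0n. exact: leq0n.
case: (leqP a (2*r+2)) => Ha2.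
  have Hk0 : k = 0 by case: Hk => //; lia.
  subst k. rewrite (_ : a - (2*r+1) = 1); last by lia.
  rewrite (_ : a - (2*r+3) = 0); last by lia.
  rewrite (_ : s - 1 - 2*r - 0 = d); last by lia.
  rewrite muln0 muln1 add0n ?addn0. nia.
have [c1 Ec] : exists c1, a = 2*r+3+c1 by exists (a - (2*r+3)); lia.
subst a.
rewrite (_ : 2*r+3+c1 - (2*r+1) = c1 + 2); last by lia.
rewrite (_ : 2*r+3+c1 - (2*r+3) = c1); last by lia.
have Hkc : k <= c1.+1 by case: Hk; lia.
have [e Ee] : exists e, c1.+1 = k + e by exists (c1.+1 - k); lia.
rewrite (_ : s - 1 - 2*r - k = d + e); last by lia.
case: k Ee {Hk Hkc} => [|k1] Ee.
  rewrite add0n in Ee. subst e. nia.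
have -> : c1 = k1 + e by lia.
nia.
Qed.

Lemma base_arith d a : d * a <= d + d * (a - 1).
Proof. case: a => [|a]; first by rewrite muln0. rewrite subSS subn0 mulnS; lia. Qed.

Section Inv.
Variables (s : nat) (k : nat -> nat).
Hypothesis Hv : valid s.+2 k.
Let a := k 0.
Let d := s.+1 - a.

Lemma inv r : r <= L s ->
  d * (a + \sum_(j < r) k j.+1) <=
  d + \sum_(j < r) (nn s j - k j.+1) * (2 * j + 3) + d * r.+1 * (a - (2 * r + 1)).
Proof.
have Ha : a <= s.+1 by case: Hv => H _; rewrite /a; lia.
elim: r => [|r IH] Hr.
  rewrite !big_ord0 !addn0 muln1 muln0 add0n. exact: base_arith.
rewrite !big_ord_recr /=.
have IH' := IH (ltnW Hr).
have Hb := L_bound Hr.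
set S1 := \sum_(j < r) k j.+1 in IH' *.
set S2 := \sum_(j < r) (nn s j - k j.+1) * (2 * j + 3) in IH' *.
have Hk : k r.+1 = 0 \/ k r.+1 + 2 * r + 2 <= a.
  case: (posnP (k r.+1)) => Hk; [by left | right].
  have := valid_bound Hv Hk. rewrite -/a. lia.
have := step_arith (s := s) (a := a) (d := d) (r := r) ltac:(rewrite /d; lia) Hb Hk.
rewrite /nn. move: IH'. rewrite !mulnDr. lia.
Qed.

End Inv.

Lemma CD a b : 'C(a + b, 2) = 'C(a, 2) + a * b + 'C(b, 2).
Proof.
elim: a => [|a IH]; first by rewrite add0n mul0n.
rewrite addSn !binS !bin1 IH. lia.
Qed.

Lemma KI s k : valid s.+2 k ->
  k 0 * s.+1 + \sum_(j < L s) k j.+1 * (s + 2*j + 4) + s.+1 * Ks s (nn s)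
  <= s.+1 + \sum_(j < L s) nn s j * (s + 2*j + 4) + k 0 * (k 0 - 1)
     + k 0 * \sum_(j < L s) k j.+1.
Proof.
move=> Hv.
have Ha : k 0 <= s.+1 by case: Hv => H _; lia.
have Hkn : forall j, j < L s -> k j.+1 <= nn s j.
  move=> j Hj; case: (posnP (k j.+1)) => Hk; first by rewrite Hk.
  have := valid_bound Hv Hk. rewrite /nn. lia.
have Hinv := inv Hv (leqnn (L s)).
set a := k 0 in Ha Hinv *.
set d := s.+1 - a in Hinv.
have E0 : d * (L s).+1 * (a - (2 * L s + 1)) = 0.
  case: (posnP d) => Hd; first by rewrite Hd.
  rewrite (_ : a - (2 * L s + 1) = 0) ?muln0 //. rewrite /d /L in Hd *. lia.
rewrite E0 addn0 in Hinv.
set K := \sum_(j < L s) k j.+1 in Hinv *.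
have E1 : \sum_(j < L s) k j.+1 * (s + 2*j + 4) =
   K * s.+1 + \sum_(j < L s) k j.+1 * (2*j+3).
  rewrite /K big_distrl -big_split /=. apply: eq_bigr => j _. lia.
have E2 : \sum_(j < L s) nn s j * (s + 2*j + 4) =
   Ks s (nn s) * s.+1 + \sum_(j < L s) nn s j * (2*j+3).
  rewrite /Ks big_distrl -big_split /=. apply: eq_bigr => j _. lia.
have E3 : \sum_(j < L s) (nn s j - k j.+1) * (2 * j + 3) + \sum_(j < L s) k j.+1 * (2*j+3)
   = \sum_(j < L s) nn s j * (2*j+3).
  rewrite -big_split /=. apply: eq_bigr => j _. by rewrite -mulnDl subnK // Hkn.
have Es : s.+1 = a + d by rewrite /d; lia.
have Eaa : a * (a - 1) + a = a * a by case: (a) => [|x]; rewrite ?muln0 // subSS subn0 mulnS; lia.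
rewrite E1 E2. rewrite Es. rewrite Es in Hinv E1 E2.
move: Hinv E3 Eaa. rewrite !mulnDr !mulnDl. lia.
Qed.

Lemma Gs_ext s k1 k2 : k1 =1 k2 -> Gs s k1 = Gs s k2.
Proof. by move=> E; apply: eq_bigr => j _; rewrite E. Qed.
Lemma Cs_ext s k1 k2 : k1 =1 k2 -> Cs s k1 = Cs s k2.
Proof. by move=> E; apply: eq_bigr => j _; rewrite E. Qed.
Lemma Ks_ext s k1 k2 : k1 =1 k2 -> Ks s k1 = Ks s k2.
Proof. by move=> E; apply: eq_bigr => j _; rewrite E. Qed.

Lemma Gs_S s k : Gs s.+2 k = k 0 * s.+1 + Gs s (fun j => k j.+1) + \sum_(j < L s) k j.+1 * (s + 2*j + 4).
Proof.
rewrite /Gs L_S big_ord_recl /= -addnA -big_split /=.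
congr (_ + _); first by rewrite /Msz mul1n subn1.
apply: eq_bigr => j _. rewrite /bump /= add1n /Msz.
have := L_bound (ltn_ord j). nia.
Qed.

Lemma Cs_S s k : Cs s.+2 k = 'C(k 0, 2) + Cs s (fun j => k j.+1).
Proof. by rewrite /Cs L_S big_ord_recl. Qed.
Lemma Ks_S s k : Ks s.+2 k = k 0 + Ks s (fun j => k j.+1).
Proof. by rewrite /Ks L_S big_ord_recl. Qed.

Lemma nn_S s : (fun j => nn s.+2 j.+1) =1 nn s.
Proof. move=> j; rewrite /nn; lia. Qed.

Lemma U5_aux n : forall s k, s <= n -> valid s k ->
  Gs s k + 'C(Ks s (nn s), 2) + Cs s (nn s) <= Gs s (nn s) + 'C(Ks s k, 2) + Cs s k.
Proof.
elim: n => [|n IH] s k Hs Hv.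
  by move: Hs; rewrite leqn0 => /eqP ->; rewrite /Gs /Cs /Ks /L /= !big_ord0.
case: s Hs Hv => [|[|s]] Hs Hv; try by rewrite /Gs /Cs /Ks /L /= !big_ord0.
have Hv' : valid s (fun j => k j.+1).
  split; last by case: Hv => _ H j; apply: H.
  case: (posnP (k 1)) => Hk; first by rewrite Hk.
  have := valid_bound Hv Hk. case: Hv => H _. lia.
have IHs := IH s _ ltac:(lia) Hv'.
have HK := KI Hv.
rewrite !Gs_S !Cs_S !Ks_S (Gs_ext _ (nn_S s)) (Cs_ext _ (nn_S s)) (Ks_ext _ (nn_S s)).
have Enn : \sum_(j < L s) nn s.+2 j.+1 * (s + 2*j + 4) = \sum_(j < L s) nn s j * (s + 2*j+4).
  by apply: eq_bigr => j _; rewrite nn_S.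
rewrite Enn.
rewrite !CD.
have C1 := C2 (nn s.+2 0). have C3 := C2 (k 0).
rewrite (_ : nn s.+2 0 = s.+1) in C1 *; last by rewrite /nn; lia.
move: IHs HK C1 C3. rewrite /Ks. lia.
Qed.

Lemma U5 s k : valid s k ->
  Gs s k + 'C(Ks s (nn s), 2) + Cs s (nn s) <= Gs s (nn s) + 'C(Ks s k, 2) + Cs s k.
Proof. exact: U5_aux (leqnn s). Qed.

Definition isgap (s x : nat) : bool :=
  (0 < x %% s.+2) && (x %% s.+2 + 2 * (x %/ s.+2) < s).

Lemma divmod_eq s q r : r < s.+2 -> (q * s.+2 + r) %/ s.+2 = q /\ (q * s.+2 + r) %% s.+2 = r.
Proof.
move=> Hr; split; first by rewrite divnMDl // divn_small ?addn0.
by rewrite modnMDl modn_small.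
Qed.

Lemma gap_decomp s x : isgap s x ->
  x = (x %/ s.+2) * s.+2 + x %% s.+2 /\ 0 < x %% s.+2 /\ x %% s.+2 + 2 * (x %/ s.+2) < s.
Proof. by move=> /andP [H1 H2]; split; first exact: divn_eq. Qed.

Lemma gap_layer s x : isgap s x -> x %/ s.+2 < L s.
Proof. move=> /andP [H1 H2]; rewrite /L. lia. Qed.

Lemma isgapP s q r : 0 < r -> r + 2 * q < s -> isgap s (q * s.+2 + r).
Proof.
move=> H1 H2; have [E1 E2] := divmod_eq q (r := r) (s := s) ltac:(lia).
by rewrite /isgap E1 E2 H1 H2.
Qed.

Section Closed.
Variables (s : nat) (b : seq nat).
Hypothesis Hs : 0 < s.
Hypothesis Hc : closedb s b.
Hypothesis Hpos : all (fun x => 0 < x) b.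

Lemma NS t x : x \in b -> t * s <= x -> x <= t * s.+2 -> t = 0.
Proof.
elim: t x => [|t IH] x Hx H1 H2 //.
exfalso.
set e := minn 2 (x - t.+1 * s).
have He : e < 3 by rewrite /e; lia.
have Hse : s + e <= x by rewrite /e; nia.
have [Hne Hy] := Hc Hx He Hse.
have Ht : t = 0.
  apply: (IH _ Hy); rewrite /e; nia.
subst t. move: Hne H1 H2; rewrite /e. lia.
Qed.

Lemma closed_gap x : x \in b -> isgap s x.
Proof.
move=> Hx.
have Hx0 : 0 < x by apply: (allP Hpos).
have E := divn_eq x s.+2. have Hr := ltn_pmod x (isT : 0 < s.+2).
apply/andP; split.
- rewrite lt0n; apply/negP => /eqP Hr0. rewrite Hr0 addn0 in E.
  have H1 : x %/ s.+2 * s <= x by nia.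
  have H2 : x <= x %/ s.+2 * s.+2 by lia.
  have Hq := NS Hx H1 H2. rewrite Hq in E. lia.
- rewrite ltnNge; apply/negP => Hge.
  have H1 : (x %/ s.+2).+1 * s <= x by nia.
  have H2 : x <= (x %/ s.+2).+1 * s.+2 by nia.
  by have := NS Hx H1 H2.
Qed.

End Closed.

Definition F (s j : nat) (b : seq nat) := [seq x <- b | x %/ s.+2 == j].
Definition kk (s : nat) (b : seq nat) (j : nat) := size (F s j b).

Lemma sum_pick (L0 q c : nat) : q < L0 -> \sum_(j < L0) (if q == j then c else 0) = c.
Proof.
move=> Hq. rewrite (bigD1 (Ordinal Hq)) //= eqxx big1 ?addn0 // => j Hj.
case: eqP => // E. move: Hj; rewrite (_ : j = Ordinal Hq) ?eqxx //. by apply: val_inj.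
Qed.

Lemma layer_sum s b (f : nat -> nat) : all (isgap s) b ->
  \sum_(x <- b) f x = \sum_(j < L s) \sum_(x <- F s j b) f x.
Proof.
move=> Hg.
rewrite (eq_big_seq (fun x => \sum_(j < L s) (if x %/ s.+2 == j then f x else 0))); last first.
  move=> x Hx. rewrite sum_pick //. apply: gap_layer. exact: (allP Hg).
rewrite exchange_big /=. apply: eq_bigr => j _.
by rewrite /F big_filter [RHS]big_mkcond.
Qed.

Lemma top_sum M : forall l : seq nat, uniq l -> all (fun x => x <= M) l ->
  sumn l + 'C(size l, 2) <= size l * M.
Proof.
elim: M => [|M IH] l Hu Ha.
  have Hs : size l <= 1.
    have := uniq_leq_size (s2 := [:: 0]) Hu. rewrite /=. apply => x Hx.
    have := allP Ha x Hx. by rewrite inE leqn0.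
  case: l Hs Hu Ha => [|x [|]] //= _ _ /andP [Hx _]. move: Hx; rewrite leqn0 => /eqP ->. done.
case Hin: (M.+1 \in l).
  have Hp := perm_to_rem Hin.
  set l' := rem M.+1 l in Hp.
  have Hu' : uniq l' by apply: rem_uniq.
  have Ha' : all (fun x => x <= M) l'.
    apply/allP => x Hx. have := Hx. rewrite mem_rem_uniq // inE => /andP [Hne Hxl].
    have := allP Ha x Hxl. rewrite leq_eqVlt => /orP [/eqP E|]; last by [].
    by move: Hne; rewrite E eqxx.
  have IH' := IH l' Hu' Ha'.
  rewrite (perm_sumn Hp) (perm_size Hp) /= binS bin1.
  nia.
have Ha' : all (fun x => x <= M) l.
  apply/allP => x Hx. have := allP Ha x Hx. rewrite leq_eqVlt => /orP [/eqP E|]; last by [].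
  by move: Hin; rewrite -E Hx.
have := IH l Hu Ha'. nia.
Qed.

Lemma max_in (l : seq nat) : l != [::] -> exists2 M, M \in l & forall x, x \in l -> x <= M.
Proof.
elim: l => [|a l IH] // _.
case: l IH => [|c l] IH.
  by exists a; rewrite ?inE // => x; rewrite inE => /eqP ->.
have [M HM HMax] := IH isT.
exists (maxn a M).
  rewrite inE; case: (leqP M a) => H; first by rewrite eqxx.
  by rewrite HM orbT.
move=> x; rewrite inE => /orP [/eqP ->|Hx]; first exact: leq_maxl.
exact: leq_trans (HMax x Hx) (leq_maxr _ _).
Qed.

Section Layers.
Variables (s : nat) (b : seq nat).
Hypothesis Hs : 0 < s.
Hypothesis Hc : closedb s b.
Hypothesis Hpos : all (fun x => 0 < x) b.
Hypothesis Hu : uniq b.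

Lemma all_gap : all (isgap s) b.
Proof. apply/allP => x Hx; exact: closed_gap Hx. Qed.

Lemma F_mem j x : x \in F s j b ->
  [/\ x \in b, x = j * s.+2 + x %% s.+2, 0 < x %% s.+2 & x %% s.+2 + 2 * j < s].
Proof.
rewrite mem_filter => /andP [/eqP Hj Hx].
have [E [H1 H2]] := gap_decomp (closed_gap Hs Hc Hpos Hx).
by rewrite Hj in E H2; split.
Qed.

Lemma F_uniq j : uniq (F s j b).
Proof. exact: filter_uniq. Qed.

Lemma kk_le j : kk s b j <= nn s j.
Proof.
rewrite /kk -(size_iota (j * s.+2 + 1) (nn s j)).
apply: uniq_leq_size (F_uniq j) _ => x Hx.
have [_ E H1 H2] := F_mem Hx.
rewrite mem_iota /nn. lia.
Qed.

Lemma F_sum j : sumn (F s j b) + 'C(kk s b j, 2) <= kk s b j * Msz s j.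
Proof.
apply: top_sum (F_uniq j) _. apply/allP => x Hx.
have [_ E H1 H2] := F_mem Hx. rewrite /Msz. nia.
Qed.

Lemma kk_chain j : 0 < kk s b j.+1 -> kk s b j.+1 + 2 <= kk s b j.
Proof.
move=> Hk.
have Hne : F s j.+1 b != [::] by rewrite -size_eq0 -lt0n.
have [M HM HMax] := max_in Hne.
have [HMb EM HM1 HM2] := F_mem HM.
set T := (M - s) :: (M - s.+1) :: map (fun x => x - s.+2) (F s j.+1 b).
have Hlow : forall x, x \in F s j.+1 b -> s.+2 < x.
  move=> x Hx. have [_ E H1 H2] := F_mem Hx. nia.
have HsubT : forall x e, x \in F s j.+1 b -> e < 3 -> x - (s + e) \in F s j b.
  move=> x e Hx He.
  have [Hxb E H1 H2] := F_mem Hx.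
  have Hl := Hlow x Hx.
  have [_ Hy] := Hc Hxb He ltac:(lia).
  rewrite mem_filter Hy andbT.
  have -> : x - (s + e) = j * s.+2 + (x %% s.+2 + 2 - e) by nia.
  have [-> _] := divmod_eq j (r := x %% s.+2 + 2 - e) (s := s) ltac:(lia).
  done.
have HTu : uniq T.
  rewrite /T /= map_inj_in_uniq ?F_uniq; last first.
    move=> x y Hx Hy. have := Hlow x Hx. have := Hlow y Hy. lia.
  rewrite andbT !inE negb_or. apply/andP; split; [apply/andP; split|].
  - have := Hlow M HM; lia.
  - apply/mapP => [[x Hx E]]. have := HMax x Hx. have := Hlow M HM. lia.
  - apply/mapP => [[x Hx E]]. have := HMax x Hx. have := Hlow M HM. lia.
have HTs : {subset T <= F s j b}.
  move=> y; rewrite /T !inE => /orP [/eqP ->|/orP [/eqP ->|/mapP [x Hx ->]]].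
  - by have := HsubT M 0 HM isT; rewrite addn0.
  - by have := HsubT M 1 HM isT; rewrite addn1.
  - by have := HsubT x 2 Hx isT; rewrite addn2.
have := uniq_leq_size HTu HTs. rewrite /T /= size_map /kk. lia.
Qed.

Lemma kk_valid : valid s (kk s b).
Proof.
split; last by move=> j; apply: kk_chain.
have := kk_le 0. rewrite /nn. lia.
Qed.

Lemma size_layers : size b = Ks s (kk s b).
Proof.
rewrite -sum1_size (layer_sum (fun _ => 1) all_gap) /Ks.
by apply: eq_bigr => j _; rewrite sum1_size.
Qed.

Lemma sumn_layers : sumn b + Cs s (kk s b) <= Gs s (kk s b).
Proof.
rewrite sumnE (layer_sum id all_gap) /Cs /Gs -big_split /=.
apply: leq_sum => j _. rewrite -sumnE. exact: F_sum.
Qed.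

End Layers.

Lemma Ksum s r : 2 * r <= s -> \sum_(j < r) nn s j + r * (r - 1) = r * (s - 1).
Proof.
elim: r => [|r IH] Hr; first by rewrite big_ord0; lia.
rewrite big_ord_recr /=. have Hr0 : 2 * r <= s by lia. have := IH Hr0.
have [t Et] : exists t, s = 2 * r + 2 + t by exists (s - (2 * r + 2)); lia.
rewrite /nn (_ : s - 1 - 2 * r = t + 1); last by lia.
rewrite (_ : s - 1 = 2 * r + 1 + t); last by lia.
rewrite (_ : r.+1 - 1 = r); last by lia.
case: r {IH Hr Hr0 Et} => [|r]; first by rewrite !big_ord0; lia.
rewrite (_ : r.+1 - 1 = r); last by lia.
set A := \sum_(j < r.+1) _. clearbody A. lia.
Qed.

Lemma Gsum s r : 2 * r <= s -> 6 * \sum_(j < r) nn s j * Msz s j + 2 * s * (r - 1) * r * (2 * r - 1)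
  = 6 * r * (s - 1) * (s - 1) + 3 * (s - 1) * (s - 2) * r * (r - 1).
Proof.
elim: r => [|r IH] Hr; first by rewrite big_ord0; lia.
rewrite big_ord_recr /=. have Hr0 : 2 * r <= s by lia. have := IH Hr0.
have [t Et] : exists t, s = 2 * r + 2 + t by exists (s - (2 * r + 2)); lia.
rewrite /nn /Msz (_ : s - 1 - 2 * r = t + 1); last by lia.
rewrite (_ : s - 1 = 2 * r + 1 + t); last by lia.
rewrite (_ : s - 2 = 2 * r + t); last by lia.
rewrite (_ : r.+1 * s - 1 = r * s + s - 1); last by lia.
rewrite (_ : r.+1 - 1 = r); last by lia. rewrite Et.
rewrite (_ : r * (2 * r + 2 + t) + (2 * r + 2 + t) - 1 = r * (2 * r + 2 + t) + (2 * r + 1 + t)); last by lia.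
rewrite (_ : 2 * r.+1 - 1 = 2 * r + 1); last by lia.
case: r {IH Hr Hr0 Et} => [|r]; first by rewrite !big_ord0; lia.
rewrite (_ : r.+1 - 1 = r); last by lia.
rewrite (_ : 2 * r.+1 - 1 = 2 * r + 1); last by lia.
set A := \sum_(j < r.+1) _. clearbody A. lia.
Qed.

Lemma Csum s r : 2 * r <= s -> 6 * \sum_(j < r) 'C(nn s j, 2) + 3 * (2 * s - 3) * r * (r - 1)
  = 3 * r * (s - 1) * (s - 2) + 2 * (r - 1) * r * (2 * r - 1).
Proof.
elim: r => [|r IH] Hr; first by rewrite big_ord0; lia.
rewrite big_ord_recr /=. have Hr0 : 2 * r <= s by lia. have := IH Hr0. have := C2 (nn s r).
have [t Et] : exists t, s = 2 * r + 2 + t by exists (s - (2 * r + 2)); lia.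
rewrite /nn (_ : s - 1 - 2 * r = t + 1); last by lia.
rewrite (_ : t + 1 - 1 = t); last by lia.
rewrite (_ : s - 1 = 2 * r + 1 + t); last by lia.
rewrite (_ : s - 2 = 2 * r + t); last by lia.
rewrite (_ : 2 * s - 3 = 4 * r + 1 + 2 * t); last by lia.
rewrite (_ : r.+1 - 1 = r); last by lia.
rewrite (_ : 2 * r.+1 - 1 = 2 * r + 1); last by lia.
case: r {IH Hr Hr0 Et} => [|r]; first by rewrite !big_ord0; lia.
rewrite (_ : r.+1 - 1 = r); last by lia.
rewrite (_ : 2 * r.+1 - 1 = 2 * r + 1); last by lia.
set A := \sum_(j < r.+1) _. clearbody A. lia.
Qed.

Lemma sumn_iota a n : sumn (iota a n) = a * n + 'C(n, 2).
Proof.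
elim: n a => [|n IH] a /=; first by rewrite muln0.
rewrite IH binS bin1. lia.
Qed.

Definition bG (s : nat) := [seq x <- rev (iota 1 (s * s)) | isgap s x].

Section BG.
Variable s : nat.
Hypothesis Hs : 0 < s.

Lemma gap_range x : isgap s x -> 0 < x <= s * s.
Proof.
move=> Hg; have [E [H1 H2]] := gap_decomp Hg.
move: (x %/ s.+2) (x %% s.+2) E H1 H2 => q r -> H1 H2.
apply/andP; split; first by lia.
have Hq : q.+1 <= s by lia.
have : q * s.+2 + r < q.+1 * s by nia.
move=> H; apply: leq_trans (ltnW H) _. exact: leq_mul.
Qed.

Lemma mem_bG x : (x \in bG s) = isgap s x.
Proof.
rewrite mem_filter mem_rev mem_iota.
case Hg: (isgap s x) => //=. have := gap_range Hg. lia.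
Qed.

Lemma bG_sorted : sorted (fun x y => y < x) (bG s).
Proof.
apply: sorted_filter; first by move=> x y z /= H1 H2; exact: ltn_trans H2 H1.
rewrite rev_sorted. exact: iota_ltn_sorted.
Qed.

Lemma bG_pos : all (fun x => 0 < x) (bG s).
Proof. apply/allP => x; rewrite mem_bG => Hg. by have /andP [] := gap_range Hg. Qed.

Lemma bG_uniq : uniq (bG s).
Proof. by rewrite filter_uniq // rev_uniq iota_uniq. Qed.

Lemma bG_closed : closedb s (bG s).
Proof.
move=> x e; rewrite !mem_bG => Hg He Hx.
have [E [H1 H2]] := gap_decomp Hg.
move: (x %/ s.+2) (x %% s.+2) E H1 H2 Hx => q r -> H1 H2 Hx.
have Hq : 0 < q.
  case: q H2 Hx => [|q] //. rewrite mul0n add0n muln0 addn0. lia.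
split; first by apply/eqP; nia.
have -> : q * s.+2 + r - (s + e) = q.-1 * s.+2 + (r + 2 - e).
  case: q Hq {Hx H2} => // q _. rewrite mulSn /=. lia.
apply: isgapP; lia.
Qed.

Lemma bG_layer j : j < L s -> perm_eq (F s j (bG s)) (iota (j * s.+2 + 1) (nn s j)).
Proof.
move=> Hj. apply: uniq_perm; [exact: filter_uniq bG_uniq | exact: iota_uniq|].
move=> x. apply/idP/idP.
- move=> Hx. have [_ E H1 H2] := F_mem Hs bG_closed bG_pos Hx.
  rewrite mem_iota /nn. lia.
- rewrite mem_iota /nn => /andP [Ha Hb].
  have -> : x = j * s.+2 + (x - j * s.+2) by lia.
  have [E1 _] := divmod_eq j (r := x - j * s.+2) (s := s) ltac:(lia).
  rewrite mem_filter E1 eqxx /= mem_bG. apply: isgapP; lia.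
Qed.

Lemma bG_sum : sumn (bG s) + Cs s (nn s) = Gs s (nn s).
Proof.
rewrite sumnE (layer_sum id (all_gap Hs bG_closed bG_pos)) /Cs /Gs -big_split /=.
apply: eq_bigr => j _. rewrite -sumnE (perm_sumn (bG_layer (ltn_ord j))) sumn_iota.
have Hj := ltn_ord j. move: (nat_of_ord j) Hj => {}j Hj.
have := C2 (nn s j). have := L_bound Hj. rewrite /nn /Msz.
set n := s - 1 - 2 * j. move=> Hb Hc.
have En : s = n + 2 * j + 1 by rewrite /n; lia.
rewrite En. clearbody n. nia.
Qed.

Lemma bG_size : size (bG s) = Ks s (nn s).
Proof.
rewrite -sum1_size (layer_sum (fun _ => 1) (all_gap Hs bG_closed bG_pos)) /Ks.
apply: eq_bigr => j _. by rewrite sum1_size (perm_size (bG_layer (ltn_ord j))) size_iota.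
Qed.

End BG.

Definition Phi s := Gs s (nn s) - 'C(Ks s (nn s), 2) - Cs s (nn s).

Lemma max_core s : 0 < s -> is_max_core_size s (Phi s).
Proof.
move=> Hs; split.
- exists (part_of (bG s)).
  have Hp := part_of_partition (bG_sorted s) (bG_pos Hs).
  have Hb := beta_part_of (bG_sorted s) (bG_pos Hs).
  split.
  + apply: (closed_core Hs Hp). rewrite Hb. exact: (bG_closed Hs).
  + have := psize_beta (part_of (bG s)). rewrite Hb part_of_size.
    have := bG_sum Hs. have := bG_size Hs. rewrite /Phi => E1 E2 E3. rewrite E1 in E3. lia.
- move=> p Hc.
  have Hp : is_partition p by case: Hc.
  have Hcl := core_closed Hs Hc.
  have Hpos : all (fun x => 0 < x) (beta p) by apply/allP => x; apply: beta_pos.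
  have Hu := beta_uniq Hp.
  have H1 := psize_beta p.
  have Hsz : size (beta p) = size p by rewrite size_map size_iota.
  have H2 := sumn_layers Hs Hcl Hpos Hu.
  have H3 := size_layers Hs Hcl Hpos.
  have H4 := U5 (kk_valid Hs Hcl Hpos Hu).
  rewrite -H3 Hsz in H4. rewrite /Phi. lia.
Qed.

Lemma C3 n : 6 * 'C(n.+2, 3) = n.+2 * n.+1 * n.
Proof.
elim: n => [|n IH] //. rewrite binS. have := C2 n.+2. lia.
Qed.

Lemma Phi_odd m : 0 < m -> Phi (2 * m - 1) = m * 'C(m.+1, 3).
Proof.
case: m => [|n] // _.
rewrite (_ : 2 * n.+1 - 1 = 2 * n + 1); last by lia.
case: n => [|r]; first by rewrite /Phi /Gs /Cs /Ks /L /= !big_ord0.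
rewrite (_ : 2 * r.+1 + 1 = 2 * r + 3); last by lia.
have EL : L (2 * r + 3) = r.+1 by rewrite /L; lia.
have HK := Ksum (s := 2 * r + 3) (r := r.+1) ltac:(lia).
have HG := Gsum (s := 2 * r + 3) (r := r.+1) ltac:(lia).
have HC := Csum (s := 2 * r + 3) (r := r.+1) ltac:(lia).
rewrite /Phi /Gs /Cs /Ks EL.
move: HK HG HC.
rewrite (_ : r.+1 - 1 = r); last by lia.
rewrite (_ : 2 * r.+1 - 1 = 2 * r + 1); last by lia.
rewrite (_ : 2 * r + 3 - 1 = 2 * r + 2); last by lia.
rewrite (_ : 2 * r + 3 - 2 = 2 * r + 1); last by lia.
rewrite (_ : 2 * (2 * r + 3) - 3 = 4 * r + 3); last by lia.
set G := \sum_(j < r.+1) nn (2 * r + 3) j * Msz (2 * r + 3) j.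
set C := \sum_(j < r.+1) 'C(nn (2 * r + 3) j, 2).
set N := \sum_(j < r.+1) nn (2 * r + 3) j.
clearbody G C N => HK HG HC.
have EN : N = r.+1 * r.+2 by lia.
have HN := C2 N. rewrite EN (_ : r.+1 * r.+2 - 1 = r * r + 3 * r + 1) in HN; last by lia.
have H3 := C3 r.+1.
have H4 : 6 * (r.+2 * 'C(r.+3, 3)) = r.+2 * (r.+3 * r.+2 * r.+1) by rewrite mulnCA H3.
rewrite EN. lia.
Qed.

Lemma Phi_even m : 0 < m -> Phi (2 * m) = m.+1 * 'C(m.+1, 3) + 'C(m.+2, 3).
Proof.
case: m => [|r] // _.
rewrite (_ : 2 * r.+1 = 2 * r + 2); last by lia.
have EL : L (2 * r + 2) = r.+1 by rewrite /L; lia.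
have HK := Ksum (s := 2 * r + 2) (r := r.+1) ltac:(lia).
have HG := Gsum (s := 2 * r + 2) (r := r.+1) ltac:(lia).
have HC := Csum (s := 2 * r + 2) (r := r.+1) ltac:(lia).
rewrite /Phi /Gs /Cs /Ks EL.
move: HK HG HC.
rewrite (_ : r.+1 - 1 = r); last by lia.
rewrite (_ : 2 * r.+1 - 1 = 2 * r + 1); last by lia.
rewrite (_ : 2 * r + 2 - 1 = 2 * r + 1); last by lia.
rewrite (_ : 2 * r + 2 - 2 = 2 * r); last by lia.
rewrite (_ : 2 * (2 * r + 2) - 3 = 4 * r + 1); last by lia.
set G := \sum_(j < r.+1) nn (2 * r + 2) j * Msz (2 * r + 2) j.
set C := \sum_(j < r.+1) 'C(nn (2 * r + 2) j, 2).
set N := \sum_(j < r.+1) nn (2 * r + 2) j.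
clearbody G C N => HK HG HC.
have EN : N = r.+1 * r.+1 by lia.
have HN := C2 N. rewrite EN (_ : r.+1 * r.+1 - 1 = r * r + 2 * r) in HN; last by lia.
have H3 := C3 r. have H3' := C3 r.+1.
have H4 : 6 * (r.+2 * 'C(r.+2, 3)) = r.+2 * (r.+2 * r.+1 * r) by rewrite mulnCA H3.
rewrite EN. lia.
Qed.


Theorem corollary3p5 (m : nat) (hm : 0 < m) :
  is_max_core_size (2 * m - 1) (m * 'C(m.+1, 3)) /\
  is_max_core_size (2 * m) (m.+1 * 'C(m.+1, 3) + 'C(m.+2, 3)).
Proof.
split.
- rewrite -(Phi_odd hm). apply: max_core. lia.
- rewrite -(Phi_even hm). apply: max_core. lia.
Qed.
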